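(* For every ribbon graph $\mathbb{G}$, the $\Delta$-matroid $D(\mathbb{G})=(E(\mathbb{G}),\mathcal{Q}(\mathbb{G}))$ is strong.
   Context: A ribbon graph $\mathbb{G}$ is a surface with boundary written as the union of vertex discs $V(\mathbb{G})$ and edge discs $E(\mathbb{G})$ meeting in disjoint line segments, each on the boundary of exactly one vertex and exactly one edge, with each edge containing exactly two such segments. For connected $\mathbb{G}$, a quasi-tree is $F\subseteq E(\mathbb{G})$ such that the spanning ribbon subgraph $(V(\mathbb{G}),F)$ has exactly one boundary component; in general, a union of quasi-trees of the components. $\mathcal{Q}(\mathbb{G})$ is the set of quasi-trees. A $\Delta$-matroid $(E,\mathcal{B})$ is strong if for all $B,B'\in\mathcal{B}$ and $x\in B\triangle B'$ there is $y\in B\triangle B'$ with both $B\triangle\{x,y\}\in\mathcal{B}$ and $B'\triangle\{x,y\}\in\mathcal{B}$. *)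

(* Defs.v *)
From mathcomp Require Import all_boot.
Set Implicit Arguments.
Unset Strict Implicit.
Unset Printing Implicit Defensive.

(* X = flags: the two endpoints of each attaching segment (edge end), so each
   edge has 4 flags.
   - rg_vt x : the vertex disc whose boundary contains flag x;
   - rg_ed x : the edge disc whose boundary contains flag x;
   - rg_alpha : swaps the two endpoints of the same attaching segment;
   - rg_eps   : joins the two endpoints of a side of the edge disc
                (a side runs from one attaching segment to the other);
   - rg_nu    : joins the two endpoints of an arc of the vertex boundary lying
                between consecutive attaching segments.
   Vertices with no flags are isolated vertices. *)
Record ribbon_graph (V E X : finType) := RibbonGraph {
  rg_vt : X -> V;
  rg_ed : X -> E;
  rg_alpha : X -> X;
  rg_eps : X -> X;
  rg_nu : X -> X;
  rg_alphaK : forall x, rg_alpha (rg_alpha x) = x;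
  rg_epsK : forall x, rg_eps (rg_eps x) = x;
  rg_nuK : forall x, rg_nu (rg_nu x) = x;
  rg_alpha_eps : forall x, rg_alpha (rg_eps x) = rg_eps (rg_alpha x);
  rg_alpha_nfix : forall x, rg_alpha x != x;
  rg_eps_nfix : forall x, rg_eps x != x;
  rg_alpha_eps_nfix : forall x, rg_alpha (rg_eps x) != x;
  rg_nu_nfix : forall x, rg_nu x != x;
  rg_ed_alpha : forall x, rg_ed (rg_alpha x) = rg_ed x;
  rg_ed_eps : forall x, rg_ed (rg_eps x) = rg_ed x;
  rg_vt_alpha : forall x, rg_vt (rg_alpha x) = rg_vt x;
  rg_vt_nu : forall x, rg_vt (rg_nu x) = rg_vt x;
  rg_edge4 : forall e, #|[set x | rg_ed x == e]| = 4;
  (* the boundary of each vertex disc is a single circle *)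
  rg_vertex_circle : forall x y, rg_vt x = rg_vt y ->
    connect [rel a b | (b == rg_alpha a) || (b == rg_nu a)] x y
}.

Section RibbonDefs.
Variables (V E X : finType) (G : ribbon_graph V E X).

(* One step along the boundary of the spanning ribbon subgraph (V(G), F):
   along a vertex arc, then either along a side of an edge of F, or across the
   attaching segment of a deleted edge (not in F). *)
Definition bstep (F : {set E}) : rel X :=
  [rel x y | (y == rg_nu G x) ||
             (y == if rg_ed G x \in F then rg_eps G x else rg_alpha G x)].

Definition vadj : rel V :=
  [rel u v | [exists x, (rg_vt G x == u) && (rg_vt G (rg_eps G x) == v)]].

(* boundary components of (V(G), F) lying in the connected component of G
   containing v: boundary cycles through flags, plus isolated vertices. *)
Definition n_boundary_in (F : {set E}) (v : V) : nat :=
  #|[set [set y | connect (bstep F) x y]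
       | x in [set x | connect vadj v (rg_vt G x)]]|
  + #|[set u | connect vadj v u && [forall x, rg_vt G x != u]]|.

Definition quasi_trees : {set {set E}} :=
  [set F | [forall v, n_boundary_in F v == 1]].

End RibbonDefs.

Definition symdiff (T : finType) (A B : {set T}) : {set T} :=
  (A :\: B) :|: (B :\: A).

Definition is_delta_matroid (T : finType) (B : {set {set T}}) : Prop :=
  B != set0 /\
  forall B1 B2, B1 \in B -> B2 \in B -> forall x, x \in symdiff B1 B2 ->
    exists2 y, y \in symdiff B1 B2 & symdiff B1 [set x; y] \in B.

Definition is_strong_delta_matroid (T : finType) (B : {set {set T}}) : Prop :=
  is_delta_matroid B /\
  forall B1 B2, B1 \in B -> B2 \in B -> forall x, x \in symdiff B1 B2 ->
    exists2 y, y \in symdiff B1 B2 &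
      (symdiff B1 [set x; y] \in B) /\ (symdiff B2 [set x; y] \in B).

(* Main.v *)
Require Import Defs.
From mathcomp Require Import all_boot perm fingroup zify.
Set Implicit Arguments.
Unset Strict Implicit.
Unset Printing Implicit Defensive.

Section RG.
Variables (V E X : finType) (G : ribbon_graph V E X).
Local Notation nu := (rg_nu G).
Local Notation al := (rg_alpha G).
Local Notation ep := (rg_eps G).
Local Notation ed := (rg_ed G).
Local Notation vt := (rg_vt G).

Definition sg (F : {set E}) x := if ed x \in F then ep x else al x.
Definition tau x := al (ep x).

Lemma alK x : al (al x) = x. Proof. exact: rg_alphaK. Qed.
Lemma epK x : ep (ep x) = x. Proof. exact: rg_epsK. Qed.
Lemma nuK x : nu (nu x) = x. Proof. exact: rg_nuK. Qed.
Lemma ed_al x : ed (al x) = ed x. Proof. exact: rg_ed_alpha. Qed.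
Lemma ed_ep x : ed (ep x) = ed x. Proof. exact: rg_ed_eps. Qed.
Lemma al_ep x : al (ep x) = ep (al x). Proof. exact: rg_alpha_eps. Qed.

Lemma ed_sg F x : ed (sg F x) = ed x.
Proof. by rewrite /sg; case: ifP => _; rewrite ?ed_al ?ed_ep. Qed.
Lemma sgK F x : sg F (sg F x) = x.
Proof. rewrite {1}/sg ed_sg /sg; case: (ed x \in F); by rewrite ?alK ?epK. Qed.
Lemma ed_tau x : ed (tau x) = ed x.
Proof. by rewrite /tau ed_al ed_ep. Qed.
Lemma sg_neq F x : sg F x != x.
Proof. rewrite /sg; case: ifP => _; [exact: rg_eps_nfix | exact: rg_alpha_nfix]. Qed.
Lemma nu_neq x : nu x != x. Proof. exact: rg_nu_nfix. Qed.
Lemma al_neq x : al x != x. Proof. exact: rg_alpha_nfix. Qed.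
Lemma ep_neq x : ep x != x. Proof. exact: rg_eps_nfix. Qed.
Lemma tau_neq x : tau x != x. Proof. exact: rg_alpha_eps_nfix. Qed.
Lemma al_inj : injective al. Proof. exact: (can_inj alK). Qed.
Lemma ep_inj : injective ep. Proof. exact: (can_inj epK). Qed.
Lemma al_neq_ep x : al x != ep x.
Proof. apply/eqP=> h; move: (tau_neq x); by rewrite /tau -h alK eqxx. Qed.
Lemma al_neq_tau x : al x != tau x.
Proof. apply/eqP=> /al_inj h; move: (ep_neq x); by rewrite -h eqxx. Qed.
Lemma ep_neq_tau x : ep x != tau x.
Proof. apply/eqP=> h; move: (al_neq (ep x)); by rewrite -/(tau x) -h eqxx. Qed.

Lemma edge4 x y : ed y = ed x -> [\/ y = x, y = al x, y = ep x | y = tau x].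
Proof.
move=> exy.
pose S := [set z | ed z == ed x].
pose s := [:: x; al x; ep x; tau x].
pose T : {set X} := [set z in s].
have sTS : T \subset S.
  by apply/subsetP=> z; rewrite !inE => /or4P[]/eqP->; rewrite ?ed_al ?ed_ep ?ed_tau.
have cT : #|T| = 4.
  rewrite cardsE; apply/card_uniqP => /=; rewrite !inE !negb_or.
  by rewrite !(eq_sym x) al_neq ep_neq tau_neq al_neq_ep al_neq_tau ep_neq_tau.
have eTS : T = S.
  by apply/eqP; rewrite eqEcard sTS cT /S rg_edge4.
have : y \in S by rewrite inE exy.
by rewrite -eTS !inE => /or4P[]/eqP->; [apply: Or41|apply: Or42|apply: Or43|apply: Or44].
Qed.

Lemma sg_cases F x : (sg F x = al x) \/ (sg F x = ep x).
Proof. by rewrite /sg; case: ifP; [right|left]. Qed.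

Lemma tau_al x : tau (al x) = ep x.
Proof. by rewrite /tau al_ep alK. Qed.
Lemma tauK x : tau (tau x) = x.
Proof. by rewrite /tau al_ep alK epK. Qed.
Lemma al_tau x : al (tau x) = ep x. Proof. by rewrite /tau alK. Qed.
Lemma ep_tau x : ep (tau x) = al x. Proof. by rewrite /tau al_ep epK. Qed.
Lemma sg_tau F x : sg F (tau x) = tau (sg F x).
Proof.
rewrite /sg ed_tau; case: ifP => _.
  by rewrite ep_tau /tau epK.
by rewrite al_tau tau_al.
Qed.


Lemma connect_ind' (T : finType) (e : rel T) (P : T -> Prop) x y :
  connect e x y -> P x -> (forall a b, e a b -> P a -> P b) -> P y.
Proof.
move=> /connectP[p]; elim: p x => [|z p IH] x /=; first by move=> _ -> .
by move=> /andP[exz pth] ey Px step; exact: (IH z pth ey (step _ _ exz Px) step).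
Qed.

Definition conn F := connect (bstep G F).
Definition closed F (S : {set X}) := forall z, z \in S -> (nu z \in S) && (sg F z \in S).

Lemma bstepE F x y : bstep G F x y = (y == nu x) || (y == sg F x).
Proof. by []. Qed.

Lemma bstep_sym F : symmetric (bstep G F).
Proof.
move=> x y; rewrite !bstepE; apply/idP/idP => /orP[]/eqP->;
  by rewrite ?nuK ?sgK eqxx ?orbT.
Qed.

Lemma conn_sym F x y : conn F x y = conn F y x.
Proof. exact: (sym_connect_sym (bstep_sym F)). Qed.

Lemma conn_trans F x y z : conn F x y -> conn F y z -> conn F x z.
Proof. exact: connect_trans. Qed.

Lemma conn_refl F x : conn F x x.
Proof. exact: connect0. Qed.

Lemma conn_nu F x : conn F x (nu x).
Proof. by apply: connect1; rewrite bstepE eqxx. Qed.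

Lemma conn_sg F x : conn F x (sg F x).
Proof. by apply: connect1; rewrite bstepE eqxx orbT. Qed.

Definition orb_ F x : {set X} := [set z | conn F x z].

Lemma orb_closed F x : closed F (orb_ F x).
Proof.
move=> z; rewrite !inE => cxz.
by rewrite (conn_trans cxz (conn_nu _ _)) (conn_trans cxz (conn_sg _ _)).
Qed.

Lemma connP F x y :
  reflect (forall S, closed F S -> x \in S -> y \in S) (conn F x y).
Proof.
apply: (iffP idP).
  move=> cxy S clS xS; apply: (@connect_ind' _ _ (fun z => z \in S) _ _ cxy xS) => a b.
  by rewrite bstepE => /orP[]/eqP-> /clS/andP[].
move=> H; have := H (orb_ F x) (@orb_closed F x); rewrite !inE; apply.
exact: conn_refl.
Qed.


Definition samec x y := connect (vadj G) (vt x) (vt y).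

Lemma vadj_sym : symmetric (vadj G).
Proof.
suff H : forall u w, vadj G u w -> vadj G w u.
  by move=> u w; apply/idP/idP => /H.
move=> u w /existsP[z /andP[/eqP zu /eqP zw]].
by apply/existsP; exists (ep z); rewrite epK zu zw !eqxx.
Qed.

Lemma samec_sym x y : samec x y = samec y x.
Proof. exact: (sym_connect_sym vadj_sym). Qed.

Lemma samec_trans x y z : samec x y -> samec y z -> samec x z.
Proof. exact: connect_trans. Qed.

Lemma samec_refl x : samec x x.
Proof. exact: connect0. Qed.

Lemma samec_vt x y : vt x = vt y -> samec x y.
Proof. by rewrite /samec => ->; exact: connect0. Qed.

Lemma samec_nu x : samec x (nu x).
Proof. by apply: samec_vt; rewrite rg_vt_nu. Qed.
Lemma samec_al x : samec x (al x).
Proof. by apply: samec_vt; rewrite rg_vt_alpha. Qed.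
Lemma samec_ep x : samec x (ep x).
Proof. by apply: connect1; apply/existsP; exists x; rewrite !eqxx. Qed.
Lemma samec_sg F x : samec x (sg F x).
Proof. rewrite /sg; case: ifP => _; [exact: samec_ep | exact: samec_al]. Qed.
Lemma samec_tau x : samec x (tau x).
Proof. exact: samec_trans (samec_ep x) (samec_al _). Qed.
Lemma samec_ed x y : ed y = ed x -> samec x y.
Proof.
case/edge4=> ->; [exact: samec_refl | exact: samec_al | exact: samec_ep | exact: samec_tau].
Qed.

Lemma conn_samec F x y : conn F x y -> samec x y.
Proof.
move=> cxy; apply: (@connect_ind' _ _ (samec x) _ _ cxy (samec_refl x)) => a b.
rewrite bstepE => /orP[]/eqP-> sxa.
  exact: samec_trans sxa (samec_nu _).
exact: samec_trans sxa (samec_sg _ _).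
Qed.

Lemma comp_closed (S : {set X}) g h :
  (forall z, z \in S -> [&& nu z \in S, al z \in S & ep z \in S]) ->
  g \in S -> samec g h -> h \in S.
Proof.
move=> clS gS sgh.
have vx : forall z w, vt z = vt w -> z \in S -> w \in S.
  move=> z w /rg_vertex_circle czw zS; apply: (@connect_ind' _ _ (fun z => z \in S) _ _ czw zS) => a b /=.
  by move=> /orP[]/eqP-> /clS/and3P[].
suff : forall w, vt w = vt h -> w \in S by apply.
have P0 : forall w, vt w = vt g -> w \in S by move=> w /esym /vx; apply.
apply: (@connect_ind' _ _ (fun u => forall w, vt w = u -> w \in S) _ _ sgh P0) => u u' /existsP[f /andP[/eqP fu /eqP fu']] Pu w wu'.
have fS : f \in S by apply: Pu.
have efS : ep f \in S by case/and3P: (clS f fS).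
by apply: (vx (ep f)) => //; rewrite fu' wu'.
Qed.


Definition Q F := forall x y, samec x y -> conn F x y.

Lemma orb_eq F x y : conn F x y -> orb_ F x = orb_ F y.
Proof.
move=> cxy; apply/setP=> z; rewrite !inE; apply/idP/idP => h.
  by apply: conn_trans h; rewrite conn_sym.
exact: conn_trans cxy h.
Qed.

Lemma vadj_flag v u : connect (vadj G) v u -> u = v \/ exists f, vt f = u.
Proof.
move=> cvu; apply: (@connect_ind' _ _ (fun u => u = v \/ exists f, vt f = u) _ _ cvu).
  by left.
move=> a b /existsP[f /andP[_ /eqP fb]] _; right; by exists (ep f).
Qed.

Lemma noflag_conn v u : (forall f, vt f != v) -> connect (vadj G) v u -> u = v.
Proof.
move=> nf cvu; apply: (@connect_ind' _ _ (fun u => u = v) _ _ cvu) => // a b.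
move=> /existsP[f /andP[/eqP fa _]] av; move: (nf f); by rewrite fa av eqxx.
Qed.

Lemma quasiE F : (F \in quasi_trees G) <-> Q F.
Proof.
rewrite inE; split.
  move=> /forallP H x y sxy; move: (H (vt x)); rewrite /n_boundary_in.
  set K := [set z | connect (vadj G) (vt x) (vt z)].
  have -> : #|[set u | connect (vadj G) (vt x) u && [forall z, vt z != u]]| = 0.
    apply/eqP; rewrite cards_eq0; apply/eqP/setP => u; rewrite !inE.
    apply/negP => /andP[/vadj_flag[-> | [f <-]] /forallP nf].
      by move: (nf x); rewrite eqxx.
    by move: (nf f); rewrite eqxx.
  rewrite addn0 => /cards1P[S eS].
  have xK : x \in K by rewrite inE; exact: connect0.
  have yK : y \in K by rewrite inE.
  have ox : orb_ F x \in [set S] by rewrite -eS; apply/imsetP; exists x.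
  have oy : orb_ F y \in [set S] by rewrite -eS; apply/imsetP; exists y.
  move: ox oy; rewrite !inE => /eqP ox /eqP oy.
  have : y \in orb_ F y by rewrite inE; exact: conn_refl.
  by rewrite oy -ox inE.
move=> HQ; apply/forallP => v; rewrite /n_boundary_in.
case: (pickP (fun f => vt f == v)) => [f0 /eqP f0v | nf].
  have -> : #|[set u | connect (vadj G) v u && [forall z, vt z != u]]| = 0.
    apply/eqP; rewrite cards_eq0; apply/eqP/setP => u; rewrite !inE.
    apply/negP => /andP[/vadj_flag[-> | [f <-]] /forallP nf].
      by move: (nf f0); rewrite f0v eqxx.
    by move: (nf f); rewrite eqxx.
  rewrite addn0; apply/cards1P; exists (orb_ F f0); apply/setP => S.
  rewrite inE; apply/imsetP/eqP => [[z]|->].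
    rewrite inE => vz ->; apply/esym/orb_eq/HQ.
    by rewrite /samec f0v.
  by exists f0; rewrite // inE f0v; exact: connect0.
have nf' : forall f, vt f != v by move=> f; rewrite nf.
have -> : [set z | connect (vadj G) v (vt z)] = set0.
  apply/setP => z; rewrite !inE; apply/negP => /(noflag_conn nf') vz.
  by move: (nf' z); rewrite vz eqxx.
rewrite imset0 cards0 add0n; apply/cards1P; exists v; apply/setP => u.
rewrite !inE; apply/idP/idP.
  by move=> /andP[/(noflag_conn nf') -> _].
move=> /eqP ->; rewrite connect0 /=; apply/forallP => z; exact: nf'.
Qed.


Lemma in_symdiff (T : finType) (A B : {set T}) e :
  (e \in symdiff A B) = ((e \in A) != (e \in B)).
Proof. by rewrite /symdiff !inE; case: (e \in A); case: (e \in B). Qed.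

Definition tog (F : {set E}) (e : E) := symdiff F [set e].

Lemma in_tog F e f : (f \in tog F e) = ((f \in F) != (f == e)).
Proof. by rewrite /tog in_symdiff inE. Qed.

Lemma tog_sd F e f : (f \in symdiff (tog F e) F) = (f == e).
Proof. by rewrite in_symdiff in_tog; case: (f \in F); case: (f == e). Qed.
Lemma tog_sd' F e f : (f \in symdiff F (tog F e)) = (f == e).
Proof. by rewrite in_symdiff in_tog; case: (f \in F); case: (f == e). Qed.

Lemma tau_sg_al x : tau (ep x) = al x.
Proof. by rewrite /tau epK. Qed.

Lemma sg_diff F F' x :
  sg F' x = if ed x \in symdiff F F' then tau (sg F x) else sg F x.
Proof.
rewrite in_symdiff /sg; case: (ed x \in F); case: (ed x \in F') => /=;
  by rewrite ?tau_sg_al ?tau_al.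
Qed.

Lemma sg_same F F' x : ed x \notin symdiff F F' -> sg F' x = sg F x.
Proof. by rewrite (sg_diff F F') => /negbTE ->. Qed.

Lemma sg_other F F' x : ed x \in symdiff F F' -> sg F' x = tau (sg F x).
Proof. by rewrite (sg_diff F F') => ->. Qed.

Lemma edge4_sg F c z : ed z = ed c ->
  [\/ z = c, z = sg F c, z = tau c | z = tau (sg F c)].
Proof.
move=> /edge4[]->; [exact: Or41 | | | exact: Or43];
  case: (sg_cases F c) => ->; rewrite ?tau_al ?tau_sg_al;
  by [apply: Or42 | apply: Or44].
Qed.

Lemma closed_tog F F' (S : {set X}) : closed F S ->
  (forall z, z \in S -> ed z \in symdiff F F' -> tau z \in S) -> closed F' S.
Proof.
move=> clS tS z zS; case/andP: (clS z zS) => -> sz /=.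
case: (boolP (ed z \in symdiff F F')) => h.
  by rewrite (sg_other h) tS // ed_sg.
by rewrite (sg_same h).
Qed.

Lemma split_tog F a g : Q F -> samec a g ->
  conn (tog F (ed a)) a g \/ conn (tog F (ed a)) (tau a) g.
Proof.
move=> HQ sag; set F' := tog F (ed a).
pose S := [set z | conn F' a z || conn F' (tau a) z].
have eS : forall z, ed z = ed a -> z \in S.
  move=> z /(edge4_sg F') []->; rewrite inE.
  - by rewrite conn_refl.
  - by rewrite conn_sg.
  - by rewrite conn_refl orbT.
  - by rewrite -sg_tau conn_sg orbT.
have clS' : closed F' S.
  move=> z; rewrite !inE => /orP[] h.
    by rewrite (conn_trans h (conn_nu _ _)) (conn_trans h (conn_sg _ _)).
  by rewrite (conn_trans h (conn_nu _ _)) (conn_trans h (conn_sg _ _)) !orbT.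
have clS : closed F S.
  apply: (closed_tog clS') => z zS.
  rewrite tog_sd => /eqP ez; by apply: eS; rewrite ed_tau.
have : g \in S by move/connP: (HQ a g sag); apply => //; rewrite inE conn_refl.
by rewrite inE => /orP[]; [left|right].
Qed.

Lemma QK F F' a : Q F -> (forall f, ed f \in symdiff F F' -> samec a f) ->
  (forall g, samec a g -> conn F' a g) -> Q F'.
Proof.
move=> HQ Hf Hc x y sxy.
case: (boolP (samec a x)) => sax.
  have say : samec a y := samec_trans sax sxy.
  by apply: conn_trans (Hc y say); rewrite conn_sym; apply: Hc.
apply/connP => S clS xS.
pose S' := [set z in S | ~~ samec a z].
have clS' : closed F S'.
  move=> z; rewrite !inE => /andP[zS nz]; case/andP: (clS z zS) => nS sS.
  have hz : ed z \notin symdiff F F' by apply: contra nz; apply: Hf.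
  rewrite nS -(sg_same hz) sS /=.
  apply/andP; split; apply: contra nz => h.
    by apply: samec_trans h _; rewrite samec_sym samec_nu.
  by apply: samec_trans h _; rewrite samec_sym samec_sg.
have : y \in S' by move/connP: (HQ x y sxy); apply => //; rewrite inE xS.
by rewrite inE => /andP[].
Qed.

Lemma even_inv (S : {set X}) (f : X -> X) :
  (forall z, z \in S -> [/\ f z \in S, f z != z & f (f z) = z]) -> ~~ odd #|S|.
Proof.
elim: {S}_.+1 {-2}S (ltnSn #|S|) => // n IH S ltS H.
case: (set_0Vmem S) => [-> | [z zS]]; first by rewrite cards0.
case: (H z zS) => fzS fzz ffz.
pose S' := S :\ z :\ f z.
have cS : #|S| = #|S'|.+2.
  rewrite (cardsD1 z S) zS (cardsD1 (f z) (S :\ z)) !inE fzz fzS.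
  by rewrite add1n add1n.
have : ~~ odd #|S'|.
  apply: IH; first by move: ltS; rewrite cS => ?; lia.
  move=> w; rewrite !inE => /and3P[wfz wz wS]; case: (H w wS) => fwS fww ffw.
  split => //; rewrite fwS andbT; apply/andP; split.
    by apply: contra wz => /eqP h; rewrite -ffw h ffz.
  by apply: contra wfz => /eqP h; rewrite -ffw h.
by rewrite cS /= negbK.
Qed.

Lemma Merge F c : ~~ conn F c (tau c) ->
  (forall g h, conn F g h -> conn (tog F (ed c)) g h) /\
  conn (tog F (ed c)) c (tau c).
Proof.
move=> nc; set F' := tog F (ed c).
have dD : forall z, (ed z \in symdiff F F') = (ed z == ed c).
  by move=> z; rewrite tog_sd'.
have sgF' : forall z, ed z = ed c -> sg F' z = tau (sg F z).
  by move=> z ez; apply: sg_other; rewrite dD ez eqxx.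
have cc : conn F' c (tau c).
  apply/negPn/negP => ncc.
  pose P := orb_ F c; pose R := orb_ F' c.
  have PRc : forall z, z \in P -> z \in R -> ed z = ed c -> z = c.
    move=> z; rewrite !inE => Pz Rz /(edge4_sg F)[] // ez; rewrite {}ez in Pz Rz.
    - have e1 : sg F' (sg F c) = tau c by rewrite sgF' ?ed_sg // sgK.
      case/negP: ncc; rewrite -e1; exact: conn_trans Rz (conn_sg _ _).
    - by move: Pz; rewrite (negbTE nc).
    - case/negP: nc; apply: conn_trans Pz _.
      by rewrite -sg_tau conn_sym conn_sg.
  have e1 : ~~ odd #|P :&: R|.
    apply: (@even_inv _ nu) => z; rewrite !inE => /andP[Pz Rz].
    rewrite nuK (conn_trans Pz (conn_nu _ _)) (conn_trans Rz (conn_nu _ _)).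
    by split => //; apply: nu_neq.
  have e2 : ~~ odd #|(P :&: R) :\ c|.
    apply: (@even_inv _ (sg F)) => z; rewrite !inE => /and3P[zc Pz Rz].
    have ez : ed z != ed c.
      by apply: contra zc => /eqP ez; apply/eqP; apply: PRc; rewrite ?inE.
    have hz : ed z \notin symdiff F F' by rewrite dD.
    rewrite sgK sg_neq (conn_trans Pz (conn_sg _ _)).
    rewrite -(sg_same hz) (conn_trans Rz (conn_sg _ _)); split => //.
    rewrite !andbT; apply/eqP => h; move: ez; by rewrite -(ed_sg F' z) h eqxx.
  move: e1; rewrite (cardsD1 c) !inE !conn_refl /=.
  by rewrite (negbTE e2).
split => // g h cgh.
have eR : forall z, ed z = ed c -> conn F' c z.
  move=> z /(edge4_sg F') [] ->.
  - exact: conn_refl.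
  - exact: conn_sg.
  - exact: cc.
  - by rewrite -sg_tau; apply: conn_trans cc (conn_sg _ _).
pose O := orb_ F' g.
have clO : closed F O.
  apply: (closed_tog (@orb_closed F' g)) => z; rewrite inE => gz.
  rewrite /F' tog_sd => /eqP ez.
  rewrite inE; apply: conn_trans gz _; apply: (@conn_trans _ _ c).
    by rewrite conn_sym; apply: eR.
  by apply: eR; rewrite ed_tau.
by move/connP: cgh => /(_ O clO); rewrite !inE conn_refl; apply.
Qed.


Lemma sd_tog2 F x y e : e \in symdiff F (tog (tog F x) y) -> (e == x) || (e == y).
Proof.
rewrite in_symdiff !in_tog.
by case: (e \in F); case: (e == x); case: (e == y).
Qed.

Lemma MergeQ F a g : Q F -> conn (tog F (ed a)) a g ->
  ~~ conn (tog F (ed a)) g (tau g) -> Q (tog (tog F (ed a)) (ed g)).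
Proof.
move=> HQ cag ngg.
set u := tog F (ed a).
have [mono cw] := Merge ngg.
apply: (@QK F _ a HQ).
  move=> f /sd_tog2 /orP[] /eqP ef.
    by apply: samec_ed.
  apply: samec_trans (conn_samec cag) _; exact: samec_ed.
move=> h sah; case: (split_tog HQ sah) => [c1|c2]; first exact: mono.
have stg : samec a (tau g) := samec_trans (conn_samec cag) (samec_tau g).
case: (split_tog HQ stg) => [c3|c4].
  by case/negP: ngg; apply: conn_trans c3; rewrite conn_sym.
apply: conn_trans (mono _ _ cag) _; apply: conn_trans cw _.
apply: (@conn_trans _ _ (tau a)); last exact: mono.
by rewrite conn_sym; apply: mono.
Qed.


Lemma swap_card (S A : {set X}) (f : X -> X) :
  (forall z, z \in S -> [/\ f z \in S, (f z \in A) != (z \in A) & f (f z) = z]) ->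
  #|S :&: A| = #|S :\: A|.
Proof.
move=> H.
have inj : {in S &, injective f}.
  move=> z1 z2 z1S z2S e; case: (H z1 z1S) => _ _ <-; case: (H z2 z2S) => _ _ <-.
  by rewrite e.
have le1 : forall B : {set X}, B \subset S -> #|B| = #|f @: B|.
  move=> B sBS; rewrite card_in_imset //; move=> z1 z2 z1B z2B; apply: inj;
  exact: (subsetP sBS).
apply/eqP; rewrite eqn_leq; apply/andP; split.
  rewrite (le1 _ (subsetIl S A)); apply: subset_leq_card; apply/subsetP => w.
  move=> /imsetP[z]; rewrite !inE => /andP[zS zA] ->.
  case: (H z zS) => fS fA _; rewrite fS andbT; move: fA; rewrite zA.
  by case: (f z \in A).
rewrite (le1 _ (subsetDl S A)); apply: subset_leq_card; apply/subsetP => w.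
move=> /imsetP[z]; rewrite !inE => /andP[zA zS] ->.
case: (H z zS) => fS fA _; rewrite fS /=; move: fA; rewrite (negbTE zA).
by case: (f z \in A).
Qed.

Lemma card2 (R A : {set X}) p q : p \in R -> q \in R -> p != q ->
  #|R :&: A| = (p \in A) + (q \in A) + #|(R :\ p :\ q) :&: A|.
Proof.
move=> pR qR npq.
rewrite (cardsD1 p (R :&: A)) (cardsD1 q ((R :&: A) :\ p)) !inE pR qR eq_sym npq /=.
rewrite addnA; congr (_ + _ + _); apply: eq_card => z; rewrite !inE.
by case: (z == q); case: (z == p); case: (z \in R); case: (z \in A).
Qed.

Lemma tperm_split (T : finType) (s : {perm T}) x y : x != y ->
  x \in porbit s y -> x \notin porbit (tperm x y * s) y.
Proof.
move=> nxy xs.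
have h1 := porbits_mul_tperm s x y.
have h2 := porbits_mul_tperm (tperm x y * s) x y.
rewrite /= in h1 h2; rewrite tpermKg in h2; rewrite xs nxy /= in h1; rewrite nxy in h2.
move: h1 h2; case: (x \in porbit (tperm x y * s) y) => //=.
move=> h1 h2; lia.
Qed.

Definition phi Z g := nu (sg Z g).
Lemma phiK Z : cancel (phi Z) (fun g => sg Z (nu g)).
Proof. by move=> g; rewrite /phi nuK sgK. Qed.
Definition phiP Z := perm (can_inj (phiK Z)).
Lemma phiPE Z g : phiP Z g = nu (sg Z g).
Proof. by rewrite /phiP permE. Qed.
Lemma phiPV Z g : ((phiP Z)^-1)%g g = sg Z (nu g).
Proof.
apply: (@perm_inj _ (phiP Z)); rewrite permKV phiPE.
by rewrite sgK nuK.
Qed.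

Lemma nu_notin Z g : nu g \notin porbit (phiP Z) g.
Proof.
apply/negP => /porbitP[k]; rewrite permX => ek.
have key : forall h, phi Z (nu (phi Z h)) = nu h.
  by move=> h; rewrite /phi nuK sgK.
have phinj : injective (phi Z) := can_inj (phiK Z).
have ej : forall j, j <= k -> nu (iter j (phiP Z) g) = iter (k - j) (phiP Z) g.
  elim=> [|j IH] ltj; first by rewrite subn0.
  have e1 := IH (ltnW ltj).
  have kj : k - j = (k - j.+1).+1 by lia.
  rewrite kj iterS in e1.
  apply: phinj; rewrite iterS.
  have key' : forall h, phi Z (nu (phiP Z h)) = nu h by move=> h; rewrite phiPE key.
  by rewrite key' e1 phiPE.
move: (odd_double_half k); case: (odd k) => /= ek2.
  have := ej k./2; rewrite (_ : k - k./2 = (k./2).+1); last by lia.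
  move=> /(_ (ltac:(lia))); rewrite iterS phiPE => /(can_inj nuK) h.
  by move: (sg_neq Z (iter k./2 (phiP Z) g)); rewrite -h eqxx.
have := ej k./2; rewrite (_ : k - k./2 = k./2); last by lia.
move=> /(_ (ltac:(lia))) h.
by move: (nu_neq (iter k./2 (phiP Z) g)); rewrite h eqxx.
Qed.


Definition col Z a := porbit (phiP Z) a.

Lemma col_porbit Z a h : h \in col Z a -> porbit (phiP Z) h = col Z a.
Proof. by move=> h_in; apply/eqP; rewrite eq_porbit_mem. Qed.

Lemma col_id Z a : a \in col Z a.
Proof. exact: porbit_id. Qed.

Lemma col_phi Z a h : h \in col Z a -> phiP Z h \in col Z a.
Proof.
move=> hC; rewrite -(col_porbit hC).
by have := mem_porbit (phiP Z) 1 h; rewrite expg1.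
Qed.

Lemma col_phiV Z a h : h \in col Z a -> sg Z (nu h) \in col Z a.
Proof.
move=> hC; rewrite -phiPV -(col_porbit hC) -porbitV.
by have := mem_porbit ((phiP Z)^-1)%g 1 h; rewrite expg1.
Qed.

Lemma col_nu_out Z a h : h \in col Z a -> nu h \notin col Z a.
Proof. by move=> hC; rewrite -(col_porbit hC) nu_notin. Qed.

Lemma col_cover Z a g : Q Z -> samec a g -> (g \in col Z a) || (nu g \in col Z a).
Proof.
move=> HQ sag.
pose T := [set z | (z \in col Z a) || (nu z \in col Z a)].
have clT : closed Z T.
  move=> z; rewrite !inE nuK => /orP[] zC.
    have h := col_phi zC; rewrite phiPE in h; by rewrite zC h !orbT.
  have h := col_phiV zC; rewrite nuK in h; by rewrite zC h ?orbT ?andbT.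
have : g \in T by move/connP: (HQ a g sag); apply => //; rewrite inE col_id.
by rewrite inE.
Qed.

Lemma col_nu Z a g : Q Z -> samec a g -> (nu g \in col Z a) = ~~ (g \in col Z a).
Proof.
move=> HQ sag; case: (boolP (g \in col Z a)) => gC /=.
  by apply/negbTE; apply: col_nu_out.
by move: (col_cover HQ sag); rewrite (negbTE gC).
Qed.

Lemma col_sg Z a g : Q Z -> samec a g -> (sg Z g \in col Z a) = ~~ (g \in col Z a).
Proof.
move=> HQ sag; case: (boolP (g \in col Z a)) => gC /=.
  apply/negbTE; have := col_nu_out (col_phi gC).
  by rewrite phiPE nuK.
have nC : nu g \in col Z a by move: (col_cover HQ sag); rewrite (negbTE gC).
by have := col_phiV nC; rewrite nuK.
Qed.

Lemma Qtog F c : Q F -> conn (tog F (ed c)) c (tau c) -> Q (tog F (ed c)).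
Proof.
move=> HQ cc; set F' := tog F (ed c).
have eO : forall z, ed z = ed c -> conn F' c z.
  move=> z /(edge4_sg F') [] ->.
  - exact: conn_refl.
  - exact: conn_sg.
  - exact: cc.
  - by rewrite -sg_tau; apply: conn_trans cc (conn_sg _ _).
apply: (@QK F F' c HQ).
  by move=> f; rewrite tog_sd' => /eqP ef; apply: samec_ed.
move=> g scg.
have clO : closed F (orb_ F' c).
  apply: (closed_tog (@orb_closed F' c)) => z; rewrite inE => cz.
  by rewrite /F' tog_sd => /eqP ez; rewrite inE; apply: eO; rewrite ed_tau.
by move/connP: (HQ c g scg) => /(_ _ clO); rewrite !inE conn_refl; apply.
Qed.

Lemma TWa Z a g : Q Z -> samec a g ->
  (sg (tog Z (ed g)) g \in col Z a) = (g \in col Z a) -> Q (tog Z (ed g)).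
Proof.
move=> HQ sag same; apply: Qtog => //.
apply/negPn/negP => ncc.
set w := tog Z (ed g); set C := col Z a; pose R := orb_ w g.
have Rsub : forall z, z \in R -> samec a z.
  by move=> z; rewrite inE => /conn_samec; apply: samec_trans.
have Redge : forall z, z \in R -> ed z = ed g -> (z == g) || (z == sg w g).
  move=> z; rewrite inE => gz /(edge4_sg w) [] ez; rewrite ez ?eqxx ?orbT //.
    by rewrite ez in gz; rewrite gz in ncc.
  rewrite ez -sg_tau in gz; case/negP: ncc.
  by rewrite -(sgK w (tau g)); apply: conn_trans gz (conn_sg _ _).
have b1 : #|R :&: C| = #|R :\: C|.
  apply: (@swap_card _ _ nu) => z zR; split; last exact: nuK.
    by move: zR; rewrite !inE => gz; apply: conn_trans gz (conn_nu _ _).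
  by rewrite (col_nu HQ (Rsub z zR)); case: (z \in C).
have gR : g \in R by rewrite inE conn_refl.
have sgR : sg w g \in R by rewrite inE conn_sg.
have ng : g != sg w g by rewrite eq_sym sg_neq.
have b2 : #|(R :\ g :\ sg w g) :&: C| = #|(R :\ g :\ sg w g) :\: C|.
  apply: (@swap_card _ _ (sg Z)) => z; rewrite !inE => /and3P[z1 z2 zR0].
  have zR : z \in R by rewrite inE.
  have ez : ed z != ed g.
    apply/negP => /eqP ez; move: (Redge z zR ez); by rewrite (negbTE z1) (negbTE z2).
  have hz : ed z \notin symdiff Z w by rewrite /w tog_sd'.
  split; last exact: sgK.
    rewrite -(sg_same hz) (conn_trans zR0 (conn_sg _ _)) andbT.
    apply/andP; split; apply/negP => /eqP h; move: ez;
      by rewrite -(ed_sg w z) h ?ed_sg eqxx.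
  by rewrite (col_sg HQ (Rsub z zR)); case: (z \in C).
rewrite [R :\: C]setDE (card2 C gR sgR ng) (card2 (~: C) gR sgR ng) !inE in b1.
rewrite [(R :\ g :\ sg w g) :\: C]setDE in b2.
move: b1 b2; rewrite /C same; case: (g \in col Z a) => /=; lia.
Qed.


Lemma porbit_step (T : finType) (s : {perm T}) x h :
  h \in porbit s x -> s h \in porbit s x.
Proof.
move=> hx; have e : porbit s h = porbit s x by apply/eqP; rewrite eq_porbit_mem.
by rewrite -e; have := mem_porbit s 1 h; rewrite expg1.
Qed.

Lemma porbit_stepV (T : finType) (s : {perm T}) x h :
  h \in porbit s x -> (s^-1)%g h \in porbit s x.
Proof.
move=> hx; have e : porbit s h = porbit s x by apply/eqP; rewrite eq_porbit_mem.
by rewrite -e -porbitV; have := mem_porbit (s^-1)%g 1 h; rewrite expg1.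
Qed.

Lemma TWb Z a : Q Z -> Q (tog Z (ed a)) -> sg (tog Z (ed a)) a \in col Z a.
Proof.
move=> HQ HQ2; apply/negPn/negP => a'C.
set F2 := tog Z (ed a); set C := col Z a.
set a1 := sg Z a; set a' := sg F2 a; set a2 := tau a.
have sd : ed a \in symdiff Z F2 by rewrite /F2 tog_sd' eqxx.
have ea' : a' = tau a1 by rewrite /a' (sg_other sd).
have aC : a \in C := col_id Z a.
have a1C : a1 \notin C by rewrite /a1 (col_sg HQ (samec_refl a)) aC.
have sga2 : sg Z a2 = a' by rewrite /a2 sg_tau -/a1 ea'.
have a2C : a2 \in C.
  have := col_sg HQ (samec_tau a); rewrite -/a2 sga2.
  by move: a'C; rewrite -/C; case: (a' \in C); case: (a2 \in C).
have sF2a2 : sg F2 a2 = a1 by rewrite /a2 sg_tau -/a' ea' tauK.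
pose psi := (tperm a a2 * phiP Z)%g.
have psiE : forall h, psi h = phiP Z (tperm a a2 h) by move=> h; rewrite permM.
have d1 : forall h, h \in porbit psi a -> h \in C.
  move=> h /porbitP[i ->]; elim: i => [|i IH]; first by rewrite expg0 perm1.
  rewrite expgSr permM psiE; apply: col_phi.
  by case: tpermP => [_|_|_ _].
have d2 : forall h, h \in C -> sg F2 h = nu (psi h).
  move=> h hC; rewrite psiE; case: tpermP => [eh|eh|nha nha2].
  - by rewrite eh phiPE nuK sga2.
  - by rewrite eh phiPE nuK sF2a2.
  rewrite phiPE nuK; apply: sg_same; rewrite /F2 tog_sd'.
  apply/negP => /eqP /(edge4_sg Z) [] eh.
  - exact: nha eh.
  - by move: hC; rewrite eh -/a1 (negbTE a1C).
  - exact: nha2 eh.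
  - by move: hC; rewrite eh -/a1 -ea' (negbTE a'C).
pose P := porbit psi a.
pose T := [set g | (g \in P) || (nu g \in P)].
have clT : closed F2 T.
  move=> z; rewrite !inE nuK => /orP[] zP.
    by rewrite zP (d2 z (d1 z zP)) nuK porbit_step ?orbT.
  rewrite zP /=.
  set w := ((psi^-1)%g (nu z)).
  have wP : w \in P by apply: porbit_stepV.
  have ew : sg F2 w = z by rewrite (d2 w (d1 w wP)) /w permKV nuK.
  by rewrite -ew sgK wP.
have : a2 \in T.
  move/connP: (HQ2 a a2 (samec_tau a)); apply => //.
  by rewrite inE porbit_id.
rewrite inE => /orP[] h.
  have ha : a \in porbit (phiP Z) a2 by rewrite porbit_sym.
  have na : a != a2 by rewrite eq_sym /a2 tau_neq.
  have := tperm_split na ha.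
  by rewrite porbit_sym h.
by move: (col_nu_out a2C); rewrite -/C (d1 _ h).
Qed.


Lemma sd_uz F1 F2 x e :
  (e \in symdiff (tog F1 x) (tog F2 x)) = (e \in symdiff F1 F2).
Proof. rewrite /tog !in_symdiff !inE; by case: (e \in F1); case: (e \in F2); case: (e == x). Qed.

Lemma sd_sym (F1 F2 : {set E}) e : (e \in symdiff F1 F2) = (e \in symdiff F2 F1).
Proof. by rewrite !in_symdiff; case: (e \in F1); case: (e \in F2). Qed.

Lemma togK F e : tog (tog F e) e = F.
Proof. apply/setP => f; rewrite !in_tog; by case: (f \in F); case: (f == e). Qed.

Lemma tog2 F x y : x != y -> tog (tog F x) y = symdiff F [set x; y].
Proof.
move=> nxy; apply/setP => f; rewrite !in_tog in_symdiff !inE.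
case: (eqVneq f x) => [->|fx]; first by rewrite (negbTE nxy); case: (x \in F).
by case: (f \in F); case: (f == y).
Qed.

Lemma tog1 F x : tog F x = symdiff F [set x; x].
Proof. by apply/setP => f; rewrite in_tog in_symdiff !inE orbb. Qed.

Lemma sg_uF2 F1 F2 a : ed a \in symdiff F1 F2 -> sg (tog F1 (ed a)) a = sg F2 a.
Proof.
move=> h; apply: sg_same; move: h; rewrite /tog !in_symdiff !inE eqxx.
by case: (ed a \in F1); case: (ed a \in F2).
Qed.

Lemma caseB2 F1 F2 a : Q F1 -> Q F2 -> ed a \in symdiff F1 F2 ->
  ~ Q (tog F1 (ed a)) -> Q (tog F2 (ed a)) ->
  exists2 y, y \in symdiff F1 F2 &
    Q (symdiff F1 [set ed a; y]) /\ Q (symdiff F2 [set ed a; y]).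
Proof.
move=> HQ1 HQ2 xD nQu HQZ.
set x := ed a; set u := tog F1 x; set Z := tog F2 x; set C := col Z a.
pose P := orb_ u a.
have nca : ~~ conn u a (tau a).
  by apply/negP => c; apply: nQu; exact: Qtog HQ1 c.
have sdu : forall e, (e \in symdiff u Z) = (e \in symdiff F1 F2) by move=> e; apply: sd_uz.
have suaC : sg u a \in C.
  rewrite /u /x (sg_uF2 xD).
  have HZ2 : Q (tog Z (ed a)) by rewrite /Z /x togK.
  by have := TWb HQZ HZ2; rewrite /Z /x togK.
have Psub : forall z, z \in P -> samec a z by move=> z; rewrite inE; apply: conn_samec.
have aP : a \in P by rewrite inE conn_refl.
have saP : sg u a \in P by rewrite inE conn_sg.
have Px : forall z, z \in P -> ed z = x -> (z == a) || (z == sg u a).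
  move=> z; rewrite inE => cz /(edge4_sg u) [] ez; rewrite ez ?eqxx ?orbT //.
    by rewrite ez (negbTE nca) in cz.
  rewrite ez -sg_tau in cz; case/negP: nca.
  by rewrite -(sgK u (tau a)); apply: conn_trans cz (conn_sg _ _).
case: (pickP (fun g => [&& g \in P, ed g != x, (sg u g \in C) == (g \in C)
                         & sg Z g \notin P])) => [g | none].
  case/and4P => gP gx same nZP.
  have sdg : ed g \in symdiff Z u.
    apply/negPn/negP => h; move: nZP; rewrite inE in gP.
    by rewrite inE -(sg_same h) (conn_trans gP (conn_sg _ _)).
  have esg : sg u g = tau (sg Z g) := sg_other sdg.
  exists (ed g); first by rewrite -sdu sd_sym.
  split.
    rewrite -tog2 1?eq_sym //; apply: MergeQ => //; first by rewrite inE in gP.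
    apply/negP => cg; move: nZP; rewrite inE -[sg Z g]tauK -esg -sg_tau; move/negP; apply; rewrite inE in gP.
    exact: conn_trans (conn_trans gP cg) (conn_sg _ _).
  rewrite -tog2 1?eq_sym //; apply: (@TWa Z a g HQZ (Psub g gP)).
  rewrite (@sg_other Z) ?tog_sd' ?eqxx // -esg; exact/eqP.
have Hnone : forall g, g \in P -> ed g != x -> (sg u g \in C) == (g \in C) -> sg Z g \in P.
  move=> g gP gx same; move: (none g); rewrite gP gx same /=.
  by move/negbT; rewrite negbK.
exfalso.
pose f g := if (sg u g \in C) != (g \in C) then sg u g else sg Z g.
pose S := [set g in P | ed g != x].
have b1 : #|P :&: C| = #|P :\: C|.
  apply: (@swap_card _ _ nu) => z zP; split; last exact: nuK.
    by move: zP; rewrite !inE => gz; apply: conn_trans gz (conn_nu _ _).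
  by rewrite (col_nu HQZ (Psub z zP)); case: (z \in C).
have b2 : #|S :&: C| = #|S :\: C|.
  apply: (@swap_card _ _ f) => z; rewrite inE => /andP[zP zx].
  have saz := Psub z zP.
  rewrite /f; case: (boolP ((sg u z \in C) != (z \in C))) => hc.
    rewrite sgK; split.
    - by rewrite inE ed_sg zx andbT inE (conn_trans _ (conn_sg _ _)) //; rewrite inE in zP.
    - by [].
    - by rewrite eq_sym hc.
  move: hc; rewrite negbK => hc.
  have sZP := Hnone z zP zx hc.
  have sdz : ed z \in symdiff Z u.
    apply/negPn/negP => h; move: hc; rewrite (sg_same h) (col_sg HQZ saz).
    by case: (z \in C).
  have e1 : sg u z = tau (sg Z z) := sg_other sdz.
  have e2 : sg u (sg Z z) = tau z by rewrite (sg_other (F:=Z)) ?ed_sg // sgK.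
  have ct := col_sg HQZ (samec_trans saz (samec_tau z)).
  rewrite sg_tau -e1 in ct.
  split.
  - by rewrite inE sZP ed_sg zx.
  - by rewrite (col_sg HQZ saz); case: (z \in C).
  - rewrite e2; have -> : (tau z \in C) != (sg Z z \in C) = false.
      rewrite (col_sg HQZ saz); move/eqP: hc => hc; move: ct; rewrite hc.
      by case: (z \in C); case: (tau z \in C).
    by rewrite sgK.
have eS : S = P :\ a :\ sg u a.
  apply/setP => z; rewrite !inE; case: (boolP (conn u a z)) => zP; rewrite ?andbF //.
  rewrite !andbT /=; case: (eqVneq (ed z) x) => ez /=.
    have zP' : z \in P by rewrite inE.
    by move: (Px z zP' ez); case: (z == a); case: (z == sg u a).
  apply/esym/andP; split; apply/negP => /eqP h; move: ez; by rewrite h ?ed_sg eqxx.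
have nas : a != sg u a by rewrite eq_sym sg_neq.
rewrite [P :\: C]setDE (card2 C aP saP nas) (card2 (~: C) aP saP nas) !inE in b1.
rewrite [S :\: C]setDE in b2; rewrite -eS in b1.
move: b1 b2; rewrite col_id suaC /=; lia.
Qed.


Lemma caseB1 F1 F2 a : Q F1 -> Q F2 -> ed a \in symdiff F1 F2 ->
  ~ Q (tog F1 (ed a)) -> ~ Q (tog F2 (ed a)) ->
  exists2 y, y \in symdiff F1 F2 &
    Q (symdiff F1 [set ed a; y]) /\ Q (symdiff F2 [set ed a; y]).
Proof.
move=> HQ1 HQ2 xD nQu nQZ.
set x := ed a; set u := tog F1 x; set Z := tog F2 x.
pose P := orb_ u a; pose P' := orb_ Z a.
have nca : ~~ conn u a (tau a).
  by apply/negP => c; apply: nQu; exact: Qtog HQ1 c.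
have ncz : ~~ conn Z a (tau a).
  by apply/negP => c; apply: nQZ; exact: Qtog HQ2 c.
have sdu : forall e, (e \in symdiff Z u) = (e \in symdiff F1 F2).
  by move=> e; rewrite sd_sym sd_uz.
case: (pickP (fun g => [&& g \in P, g \in P', ed g != x, sg u g \notin P'
                         & sg Z g \notin P])) => [g | none].
  case/and5P => gP gP' gx nuP nZP.
  rewrite !inE in gP gP'.
  have sdg : ed g \in symdiff Z u.
    apply/negPn/negP => h; move: nuP; rewrite (sg_same h) inE.
    by rewrite (conn_trans gP' (conn_sg _ _)).
  have esg : sg u g = tau (sg Z g) := sg_other sdg.
  exists (ed g); first by rewrite -sdu.
  split.
    rewrite -tog2 1?eq_sym //; apply: MergeQ => //.
    apply/negP => cg; move: nZP; rewrite inE -[sg Z g]tauK -esg -sg_tau.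
    by move/negP; apply; apply: conn_trans (conn_trans gP cg) (conn_sg _ _).
  rewrite -tog2 1?eq_sym //; apply: MergeQ => //.
  apply/negP => cg; move: nuP; rewrite inE esg -sg_tau.
  by move/negP; apply; apply: conn_trans (conn_trans gP' cg) (conn_sg _ _).
have Hnone : forall g, g \in P -> g \in P' -> ed g != x -> sg u g \notin P' ->
    sg Z g \in P.
  move=> g gP gP' gx nuP; move: (none g); rewrite gP gP' gx nuP /=.
  by move/negbT; rewrite negbK.
exfalso.
pose f g := if sg u g \in P' then sg u g else sg Z g.
pose S := [set g in P :&: P' | ed g != x].
have e1 : ~~ odd #|P :&: P'|.
  apply: (@even_inv _ nu) => z; rewrite !inE => /andP[Pz Rz].
  rewrite nuK (conn_trans Pz (conn_nu _ _)) (conn_trans Rz (conn_nu _ _)).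
  by split => //; apply: nu_neq.
have e2 : ~~ odd #|S|.
  apply: (@even_inv _ f) => z; rewrite !inE => /andP[/andP[zP zP'] zx].
  have zP2 : z \in P by rewrite inE.
  have zP2' : z \in P' by rewrite inE.
  rewrite /f; case: (boolP (sg u z \in P')) => hz.
    rewrite sgK zP2' sg_neq ed_sg zx (conn_trans zP (conn_sg _ _)) /=.
    by rewrite inE in hz; rewrite hz.
  have sZ := Hnone z zP2 zP2' zx hz.
  have sdz : ed z \in symdiff Z u.
    apply/negPn/negP => h; move: hz; rewrite (sg_same h) inE.
    by rewrite (conn_trans zP' (conn_sg _ _)).
  have e3 : sg u (sg Z z) = tau z by rewrite (sg_other (F:=Z)) ?ed_sg // sgK.
  have nt : sg u (sg Z z) \notin P'.
    rewrite e3; apply/negP; rewrite inE => ct; move: hz; rewrite (sg_other sdz).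
    by rewrite -sg_tau inE (conn_trans ct (conn_sg _ _)).
  rewrite (negbTE nt) sgK sg_neq ed_sg zx.
  rewrite inE in sZ; rewrite sZ (conn_trans zP' (conn_sg _ _)).
  by split.
have eS : S = (P :&: P') :\ a.
  apply/setP => z; rewrite !inE.
  case: (boolP (conn u a z)) => zP; rewrite ?andbF //=.
  case: (boolP (conn Z a z)) => zP'; rewrite ?andbF //=.
  case: (eqVneq (ed z) x) => ez /=; last first.
    by rewrite andbT; apply/esym/negP => /eqP h; move: ez; rewrite h /x eqxx.
  rewrite andbT; apply/esym/negbTE; rewrite negbK; move: ez => /(edge4_sg u)[] ez.
  - by rewrite ez.
  - move: zP'; rewrite ez (sg_other (F:=Z)) ?sdu // -sg_tau => h.
    by case/negP: ncz; rewrite -(sgK Z (tau a)); apply: conn_trans h (conn_sg _ _).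
  - by move: zP; rewrite ez (negbTE nca).
  - move: zP; rewrite ez -sg_tau => h.
    by case/negP: nca; rewrite -(sgK u (tau a)); apply: conn_trans h (conn_sg _ _).
move: e1; rewrite (cardsD1 a) -eS !inE !conn_refl /=.
by rewrite (negbTE e2).
Qed.


Lemma exists_Q : exists F, Q F.
Proof.
pose cs (F : {set E}) := #|[set p : X * X | conn F p.1 p.2]|.
case: (@arg_maxnP _ set0 xpredT cs isT) => F _ Fmax; exists F.
case: (pickP (fun c => ~~ conn F c (tau c))) => [c nc | allc]; last first.
  move=> x y sxy.
  have H : forall c, conn F c (tau c) by move=> c; move: (allc c) => /negbFE.
  have : y \in orb_ F x.
    apply: (@comp_closed _ x) => //; last by rewrite inE conn_refl.
    move=> z; rewrite !inE => cz.
    rewrite (conn_trans cz (conn_nu _ _)) /=.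
    case: (sg_cases F z) => e.
      rewrite -e (conn_trans cz (conn_sg _ _)) /=.
      by rewrite -tau_al -e; apply: conn_trans (conn_trans cz (conn_sg _ _)) (H _).
    rewrite -e (conn_trans cz (conn_sg _ _)) andbT.
    by rewrite -tau_sg_al -e; apply: conn_trans (conn_trans cz (conn_sg _ _)) (H _).
  by rewrite inE.
exfalso.
have [mono cc] := Merge nc.
have : cs F < cs (tog F (ed c)).
  apply: proper_card; apply/properP; split.
    by apply/subsetP => p; rewrite !inE; apply: mono.
  by exists (c, tau c); rewrite !inE //= (negbTE nc).
move=> lt; have h : cs (tog F (ed c)) <= cs F := Fmax _ isT.
by rewrite ltnNge h in lt.
Qed.

End RG.

Theorem corollary2p33 (V E X : finType) (G : ribbon_graph V E X) :
  is_strong_delta_matroid (quasi_trees G).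
Proof.
have strong : forall B1 B2, B1 \in quasi_trees G -> B2 \in quasi_trees G ->
  forall x, x \in symdiff B1 B2 ->
    exists2 y, y \in symdiff B1 B2 &
      (symdiff B1 [set x; y] \in quasi_trees G) /\
      (symdiff B2 [set x; y] \in quasi_trees G).
  move=> B1 B2 /quasiE H1 /quasiE H2 x xD.
  have : 0 < #|[set z | rg_ed G z == x]| by rewrite rg_edge4.
  rewrite card_gt0 => /set0Pn[a]; rewrite inE => /eqP ea; subst x.
  case: (boolP (tog B1 (rg_ed G a) \in quasi_trees G)) => q1;
  case: (boolP (tog B2 (rg_ed G a) \in quasi_trees G)) => q2.
  - by exists (rg_ed G a) => //; rewrite -!tog1; split.
  - have xD' : rg_ed G a \in symdiff B2 B1 by rewrite sd_sym.
    have [y yD [Q1 Q2]] := caseB2 H2 H1 xD'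
       (fun h => negP q2 (proj2 (quasiE _ _) h)) (proj1 (quasiE _ _) q1).
    by exists y; [rewrite sd_sym | split; apply/quasiE].
  - have [y yD [Q1 Q2]] := caseB2 H1 H2 xD
       (fun h => negP q1 (proj2 (quasiE _ _) h)) (proj1 (quasiE _ _) q2).
    by exists y => //; split; apply/quasiE.
  - have [y yD [Q1 Q2]] := caseB1 H1 H2 xD
       (fun h => negP q1 (proj2 (quasiE _ _) h)) (fun h => negP q2 (proj2 (quasiE _ _) h)).
    by exists y => //; split; apply/quasiE.
split => //; split.
  have [F QF] := exists_Q G; apply/set0Pn; exists F; exact/quasiE.
move=> B1 B2 h1 h2 x xD; have [y yD [Q1 _]] := strong B1 B2 h1 h2 x xD.
by exists y.
Qed.
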